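(* Let $k\ge 1$ be an integer. Then (i) for each $n\ge 1$, $\chi_{\mu_k}(P_n)=\lceil n/2\rceil$; and (ii) for each $n\ge 3$, $\chi_{\mu_k}(C_n)=\lceil n/3\rceil$ if $n\le 3k$, and $\chi_{\mu_k}(C_n)=\lceil n/2\rceil$ otherwise.
   Context: $P_n$ and $C_n$ denote the path and cycle on $n$ vertices. A $u,v$-geodesic is a shortest $u,v$-path. For a positive integer $k$, a set $M\subseteq V(G)$ is a $k$-distance mutual-visibility set if for every two vertices $u,v\in M$ there exists a $u,v$-geodesic of length at most $k$ none of whose internal vertices lies in $M$. $\chi_{\mu_k}(G)$ is the minimum cardinality of a partition of $V(G)$ into $k$-distance mutual-visibility sets. *)

(* Defs.v *)
From mathcomp Require Import all_boot.
Set Implicit Arguments. Unset Strict Implicit. Unset Printing Implicit Defensive.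

Section Vis.
Variables (T : finType) (e : rel T).

(* A u,v-walk described by the list q of its internal vertices:
   u, q_1, ..., q_m, v with consecutive vertices adjacent; its length is size q + 1. *)
Definition is_walk (u : T) (q : seq T) (v : T) : Prop := path e u (rcons q v).

(* A u,v-geodesic: a u,v-walk of minimum length (such a walk is necessarily a path). *)
Definition is_geodesic (u : T) (q : seq T) (v : T) : Prop :=
  is_walk u q v /\ forall q', is_walk u q' v -> size q <= size q'.

Definition kdmv_set (k : nat) (M : {set T}) : Prop :=
  forall u v, u \in M -> v \in M -> u != v ->
    exists q, [/\ is_geodesic u q v, (size q).+1 <= k & all (fun x => x \notin M) q].

Definition kdmv_partition (k : nat) (P : {set {set T}}) : Prop :=
  partition P [set: T] /\ forall B, B \in P -> kdmv_set k B.

Definition is_chi_mu (k m : nat) : Prop :=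
  (exists P, kdmv_partition k P /\ #|P| = m) /\
  (forall P, kdmv_partition k P -> m <= #|P|).
End Vis.

Definition path_graph (n : nat) : rel 'I_n :=
  fun i j => (i.+1 == j :> nat) || (j.+1 == i :> nat).

(* Cycle C_n on vertex set {0,...,n-1} (for n >= 3). *)
Definition cycle_graph (n : nat) : rel 'I_n :=
  fun i j => (i.+1 %% n == j :> nat) || (j.+1 %% n == i :> nat).
Arguments path_graph n : clear implicits.
Arguments cycle_graph n : clear implicits.

(* Main.v *)
Require Import Defs.
From mathcomp Require Import all_boot zify.
Set Implicit Arguments. Unset Strict Implicit. Unset Printing Implicit Defensive.

Lemma walk_pot (T : finType) (e : rel T) (A : pred T) (f : T -> nat) :
  (forall x y, A x -> A y -> e x y -> f y <= (f x).+1) ->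
  forall p x, path e x p -> all A (x :: p) -> f (last x p) <= f x + size p.
Proof.
move=> H; elim=> [|y p IH] x /=; first by rewrite addn0.
case/andP=> exy hp /and3P[ax ay ap].
have := IH y hp; rewrite /= ay ap => /(_ isT) h.
have := H x y ax ay exy; lia.
Qed.

Lemma walk_cut (T : finType) (e : rel T) (W U : pred T) :
  (forall x y, W x -> U y -> e x y -> False) -> (forall x, W x -> U x -> False) ->
  forall p x, path e x p -> all (predU W U) (x :: p) -> W x -> U (last x p) -> False.
Proof.
move=> H D; elim=> [|y p IH] x /=; first by move=> _ _; apply: D.
case/andP=> exy hp /and3P[_ ay ap] wx ul.
case/orP: ay => [wy|uy]; last by apply: (H x y).
by apply: (IH y hp) => //=; rewrite ap andbT; apply/orP; left.
Qed.

Lemma enum_sorted n (M : {set 'I_n}) : sorted ltn [seq val x | x <- enum M].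
Proof.
apply: (subseq_sorted ltn_trans _ (iota_ltn_sorted 0 n)).
rewrite -val_enum_ord; apply: map_subseq.
rewrite -deprecated_filter_index_enum enumT. apply: filter_subseq.
Qed.

Lemma enum_lt n (M : {set 'I_n}) (x0 : 'I_n) i j : i < j -> j < #|M| ->
  (nth x0 (enum M) i : nat) < (nth x0 (enum M) j : nat).
Proof.
move=> ij jM. change (val (nth x0 (enum M) i) < val (nth x0 (enum M) j)).
have sz : size (enum M) = #|M| by rewrite cardE.
rewrite -(nth_map x0 (val x0)); last by rewrite sz; lia.
rewrite -(nth_map x0 (val x0) _ (n:=j)); last by rewrite sz.
apply: (sorted_ltn_nth ltn_trans (val x0) (enum_sorted M)) => //;
  rewrite inE size_map sz; lia.
Qed.

Lemma enum_in n (M : {set 'I_n}) (x0 : 'I_n) i : i < #|M| -> nth x0 (enum M) i \in M.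
Proof. by move=> h; rewrite -mem_enum mem_nth // -cardE. Qed.

Lemma cycE n (x y : 'I_n) : cycle_graph n x y ->
  [\/ x.+1 = y :> nat, y.+1 = x :> nat, (x.+1 = n /\ y = 0 :> nat) | (y.+1 = n /\ x = 0 :> nat)].
Proof.
have hx := ltn_ord x; have hy := ltn_ord y.
rewrite /cycle_graph; case/orP => /eqP.
  case: (ltngtP x.+1 n) => h; first by rewrite modn_small //; move=> ->; constructor 1.
    lia.
  by rewrite h modnn => <-; constructor 3.
case: (ltngtP y.+1 n) => h; first by rewrite modn_small //; move=> ->; constructor 2.
  lia.
by rewrite h modnn => <-; constructor 4.
Qed.

Lemma pathE n (x y : 'I_n) : path_graph n x y -> x.+1 = y :> nat \/ y.+1 = x :> nat.
Proof. by rewrite /path_graph; case/orP=> /eqP; auto. Qed.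

Definition vis (T : finType) (e : rel T) k (M : {set T}) u v :=
  exists q, [/\ is_geodesic e u q v, (size q).+1 <= k & all (fun x => x \notin M) q].

Lemma vis_sym (T : finType) (e : rel T) k M u v : (forall x y, e x y = e y x) ->
  vis e k M u v -> vis e k M v u.
Proof.
move=> es [q [[hw hmin] hs ha]]; exists (rev q); split; rewrite ?size_rev ?all_rev //.
have revw : forall a b s, is_walk e a s b -> is_walk e b (rev s) a.
  move=> a b s; rewrite /is_walk => h.
  have := h; rewrite -(@eq_path _ (fun z y => e y z)); last by move=> ??; rewrite es.
  by rewrite -rev_path last_rcons belast_rcons rev_cons.
split; first exact: revw.
move=> q' hq; rewrite size_rev -(size_rev q'); apply: hmin; exact: revw.
Qed.

Lemma all_neq (T : finType) (M : {set T}) q c : c \in M ->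
  all (fun x => x \notin M) q -> all (fun x => x != c) q.
Proof.
move=> cM /allP h; apply/allP => x /h; apply: contra => /eqP ->; done.
Qed.


Lemma neq_val n (x y : 'I_n) : x != y -> (x : nat) != (y : nat).
Proof. by []. Qed.

Lemma path_card n k (M : {set 'I_n}) : kdmv_set (path_graph n) k M -> #|M| <= 2.
Proof.
move=> H; rewrite leqNgt; apply/negP => h3.
have [x0 _] : exists x0, x0 \in M by apply/card_gt0P; lia.
set a := nth x0 (enum M) 0; set b := nth x0 (enum M) 1; set c := nth x0 (enum M) 2.
have ab : (a : nat) < b by apply: enum_lt; lia.
have bc : (b : nat) < c by apply: enum_lt; lia.
have aM : a \in M by apply: enum_in; lia.
have bM : b \in M by apply: enum_in; lia.
have cM : c \in M by apply: enum_in; lia.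
have ac : a != c by rewrite -val_eqE neq_ltn (ltn_trans ab bc).
have [q [[hw _] _ hall]] := H a c aM cM ac.
apply: (@walk_cut _ (path_graph n) (fun x : 'I_n => x < b) (fun x : 'I_n => b < x) _ _ (rcons q c) a hw).
- by move=> x y /= xb bx /pathE; lia.
- by move=> x /=; lia.
- rewrite /= all_rcons /= ab bc orbT /=.
  by apply/allP => x /(allP (all_neq bM hall)) /neq_val; rewrite /= neq_ltn.
- by [].
- by rewrite last_rcons.
Qed.

Lemma cyc_card4 n k (M : {set 'I_n}) : kdmv_set (cycle_graph n) k M -> #|M| <= 3.
Proof.
move=> H; rewrite leqNgt; apply/negP => h3.
have [x0 _] : exists x0, x0 \in M by apply/card_gt0P; lia.
set a := nth x0 (enum M) 0; set b := nth x0 (enum M) 1; set c := nth x0 (enum M) 2.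
set d := nth x0 (enum M) 3.
have ab : (a : nat) < b by apply: enum_lt; lia.
have bc : (b : nat) < c by apply: enum_lt; lia.
have cd : (c : nat) < d by apply: enum_lt; lia.
have aM : a \in M by apply: enum_in; lia.
have bM : b \in M by apply: enum_in; lia.
have cM : c \in M by apply: enum_in; lia.
have dM : d \in M by apply: enum_in; lia.
have ac : a != c by rewrite -val_eqE neq_ltn (ltn_trans ab bc).
have [q [[hw _] _ hall]] := H a c aM cM ac.
apply: (@walk_cut _ (cycle_graph n) (fun x : 'I_n => (x < b) || (d < x))
                 (fun x : 'I_n => (b < x) && (x < d)) _ _ (rcons q c) a hw).
- move=> x y /= /orP xb /andP bx /cycE.
  have := ltn_ord x; have := ltn_ord y; have := ltn_ord d; move=> ??? [?|?|[??]|[??]]; lia.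
- by move=> x /= /orP ? /andP ?; lia.
- rewrite /= all_rcons /= ab bc cd /= orbT /=.
  apply/allP => x xq; apply/orP.
  move: (allP (all_neq bM hall) x xq) (allP (all_neq dM hall) x xq) => /neq_val/eqP ? /neq_val/eqP ?.
  lia.
- by rewrite /= ab.
- by rewrite last_rcons /= bc cd.
Qed.

Definition fp n (c x : 'I_n) : nat := if (c : nat) < x then x - c else x + n - c.

Lemma cyc_pot n k (M : {set 'I_n}) u v c : kdmv_set (cycle_graph n) k M ->
  u \in M -> v \in M -> c \in M -> u != v -> u != c -> v != c ->
  fp c v <= fp c u + k.
Proof.
move=> H uM vM cM uv uc vc.
have [q [[hw _] hs hall]] := H u v uM vM uv.
have L : forall x y : 'I_n, x != c -> y != c -> cycle_graph n x y -> fp c y <= (fp c x).+1.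
  move=> x y /neq_val/eqP xc /neq_val/eqP yc /cycE; rewrite /fp.
  have := ltn_ord x; have := ltn_ord y; have := ltn_ord c.
  case: ifP; case: ifP => ?? ??? [?|?|[??]|[??]]; lia.
have := walk_pot (A := fun x : 'I_n => x != c) L hw.
rewrite last_rcons size_rcons /= all_rcons uc vc (all_neq cM hall) /=.
move=> /(_ isT) h; apply: (leq_trans h); rewrite leq_add2l; exact: hs.
Qed.

Lemma lt_neq n (x y : 'I_n) : (x : nat) < y -> (x != y) && (y != x).
Proof. by move=> h; rewrite -!val_eqE /= !neq_ltn h orbT. Qed.

Lemma fp_lt n (c x : 'I_n) : (c : nat) < x -> fp c x = x - c.
Proof. by rewrite /fp => ->. Qed.
Lemma fp_gt n (c x : 'I_n) : (x : nat) < c -> fp c x = x + n - c.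
Proof. by move=> h; rewrite /fp ltnNge (ltnW h). Qed.

Lemma cyc_card3 n k (M : {set 'I_n}) : 3 * k < n -> kdmv_set (cycle_graph n) k M -> #|M| <= 2.
Proof.
move=> hn H; rewrite leqNgt; apply/negP => h3.
have [x0 _] : exists x0, x0 \in M by apply/card_gt0P; lia.
set a := nth x0 (enum M) 0; set b := nth x0 (enum M) 1; set c := nth x0 (enum M) 2.
have ab : (a : nat) < b by apply: enum_lt; lia.
have bc : (b : nat) < c by apply: enum_lt; lia.
have ac : (a : nat) < c by lia.
have aM : a \in M by apply: enum_in; lia.
have bM : b \in M by apply: enum_in; lia.
have cM : c \in M by apply: enum_in; lia.
move: (lt_neq ab) (lt_neq bc) (lt_neq ac) => /andP[ab1 ab2] /andP[bc1 bc2] /andP[ac1 ac2].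
have h1 := cyc_pot H aM bM cM ab1 ac1 bc1.
have h2 := cyc_pot H bM cM aM bc1 ab2 ac2.
have h3' := cyc_pot H cM aM bM ac2 bc2 ab1.
rewrite (fp_gt bc) (fp_gt ac) in h1.
rewrite (fp_lt ac) (fp_lt ab) in h2.
rewrite (fp_gt ab) (fp_lt bc) in h3'.
have := ltn_ord c; lia.
Qed.


Lemma lower (T : finType) (e : rel T) k c P :
  (forall M, kdmv_set e k M -> #|M| <= c) -> kdmv_partition e k P -> #|T| <= c * #|P|.
Proof.
move=> H [hP hB]; rewrite -cardsT (card_partition hP).
have : \sum_(A in P) #|A| <= \sum_(A in P) c by apply: leq_sum => B hB'; apply: H; apply: hB.
by rewrite sum_nat_const mulnC.
Qed.

Lemma upper n (e : rel 'I_n) k m (blk : 'I_n -> nat) :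
  (forall x, blk x < m) -> (forall i, i < m -> exists x, blk x = i) ->
  (forall i, kdmv_set e k [set x | blk x == i]) ->
  exists P, kdmv_partition e k P /\ #|P| = m.
Proof.
move=> hm surj H.
exists [set [set x | blk x == val i] | i : 'I_m].
split; last first.
  rewrite card_imset ?card_ord // => i j /setP E.
  have [x hx] := surj i (ltn_ord i).
  by have := E x; rewrite !inE hx eqxx => /esym/eqP h; apply: val_inj.
split; last by move=> B /imsetP[i _ ->]; apply: H.
apply/and3P; split.
- apply/eqP/setP => x; rewrite inE; apply/bigcupP.
  exists [set y | blk y == blk x]; last by rewrite inE.
  by apply/imsetP; exists (Ordinal (hm x)).
- apply/trivIsetP => A B /imsetP[i _ ->] /imsetP[j _ ->] neq.
  rewrite -setI_eq0; apply/eqP/setP => x; rewrite !inE.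
  apply/negP => /andP[/eqP hi /eqP hj].
  have ij : i = j by apply: val_inj; rewrite -hi -hj.
  by move: neq; rewrite ij eqxx.
- apply/imsetP => [[i _ h]].
  have [x hx] := surj i (ltn_ord i).
  by have := in_set0 x; rewrite h inE hx eqxx.
Qed.

Lemma kdmv_adj (T : finType) (e : rel T) k (M : {set T}) : 0 < k ->
  (forall u v, u \in M -> v \in M -> u != v -> e u v) -> kdmv_set e k M.
Proof.
move=> hk H u v uM vM uv; exists [::]; split => //.
split => //; by rewrite /is_walk /= H.
Qed.


Definition cv n (Hn : 0 < n) (j : nat) : 'I_n := Ordinal (ltn_pmod j Hn).

Lemma path_iota (T : finType) (e : rel T) (f : nat -> T) :
  (forall i, e (f i) (f i.+1)) -> forall m a, path e (f a) [seq f i | i <- iota a.+1 m].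
Proof. by move=> H; elim=> [|m IH] a //=; rewrite H IH. Qed.

Definition dd (u x : nat) := if u <= x then x - u else u - x.
Definition cdist n (u x : 'I_n) : nat := minn (dd u x) (n - dd u x).

Lemma modnLt2 a n : a < n + n -> a %% n = if a < n then a else a - n.
Proof.
case: ifP => h h2; first by rewrite modn_small.
rewrite -{1}(subnK (m:=n) (n:=a)); last by lia.
rewrite modnDr modn_small //; lia.
Qed.

Lemma cdist_lip n (u x y : 'I_n) : cycle_graph n x y -> cdist u y <= (cdist u x).+1.
Proof.
move/cycE; rewrite /cdist /dd.
have := ltn_ord x; have := ltn_ord y; have := ltn_ord u.
case: ifP; case: ifP => ?? ??? [?|?|[??]|[??]]; lia.
Qed.

Lemma cyc_sym n : forall x y, cycle_graph n x y = cycle_graph n y x.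
Proof. by move=> x y; rewrite /cycle_graph orbC. Qed.

Lemma cyc_arc n (Hn : 0 < n) k (M : {set 'I_n}) (u v : 'I_n) m :
  0 < m -> m <= k -> m + m <= n -> (v : nat) = (u + m) %% n ->
  (forall i, 0 < i < m -> cv Hn (u + i) \notin M) -> vis (cycle_graph n) k M u v.
Proof.
case: m => [//|p] _ mk m2 hv hM.
pose f := fun i => cv Hn (u + i).
have fe : forall i, cycle_graph n (f i) (f i.+1).
  move=> i; apply/orP; left.
  by rewrite /= -[((u+i)%%n).+1]addn1 modnDml addn1 addnS.
have f0 : f 0 = u by apply: val_inj; rewrite /= addn0 modn_small.
have fm : f p.+1 = v by apply: val_inj; rewrite /= hv.
have cdv : cdist u v = p.+1.
  rewrite /cdist /dd hv modnLt2; last by have := ltn_ord u; lia.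
  have := ltn_ord u; case: ifP; case: ifP => ? ? ?; lia.
have cdu : cdist u u = 0 by rewrite /cdist /dd leqnn subnn; lia.
rewrite /vis; exists [seq f i | i <- iota 1 p]; split.
- split.
  + have iR : iota 1 (p + 1) = rcons (iota 1 p) p.+1 by rewrite iotaD cats1 add1n.
    rewrite /is_walk -fm -map_rcons -iR addn1 -{1}f0; exact: path_iota.
  + move=> q' hq'.
    have := walk_pot (A := predT) (f := cdist u) (fun x y _ _ h => cdist_lip u h) hq'.
    rewrite last_rcons size_rcons cdv cdu all_predT size_map size_iota => /(_ isT).
    by rewrite add0n ltnS.
- by rewrite size_map size_iota.
- rewrite all_map; apply/allP => i; rewrite mem_iota => /andP[? ?] /=; apply: hM; lia.
Qed.


Lemma dec3 (w t : nat) : 0 < t -> w < 3 * t -> exists c : nat, (c == 0) || (c == 1) || (c == 2) /\ w = c * t + w %% t.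
Proof.
move=> t0 wt; exists (w %/ t); split; last exact: divn_eq.
have : w %/ t < 3 by rewrite ltn_divLR // mulnC.
by case: (w %/ t) => [|[|[|]]].
Qed.

Lemma tri_block n k (Hn : 0 < n) (t j : nat) : 3 <= n -> n <= 3 * k -> t = (n + 2) %/ 3 ->
  kdmv_set (cycle_graph n) k [set x : 'I_n | x %% t == j].
Proof.
move=> n3 nk ht.
have t0 : 0 < t by lia.
have tk : t <= k by lia.
have t2 : t + t <= n by lia.
have nt : n <= 3 * t by lia.
move=> u v; rewrite !inE => /eqP uj /eqP vj uv.
suff W : forall u v : 'I_n, u %% t = j -> v %% t = j -> (u : nat) < v ->
    vis (cycle_graph n) k [set x : 'I_n | x %% t == j] u v.
  case: (ltngtP u v) => h; first exact: W.
    by apply: (vis_sym (@cyc_sym n)); apply: W.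
  by move/neq_val: uv; rewrite h eqxx.
move=> {uv uj vj} {}u {}v uj vj uv.
have [a [ha du]] := dec3 t0 (leq_trans (ltn_ord u) nt).
have [b [hb dv]] := dec3 t0 (leq_trans (ltn_ord v) nt).
rewrite uj in du; rewrite vj in dv.
have jt : j < t by rewrite -uj ltn_mod.
have vn := ltn_ord v.
have [hab|hab] : b = a.+1 \/ (a = 0 /\ b = 2).
  by move: ha hb du dv => /orP[/orP[]|] /eqP -> /orP[/orP[]|] /eqP ->; lia.
- have uvt : (v : nat) = u + t by rewrite dv du hab mulSn; lia.
  apply: (@cyc_arc n Hn k _ u v t) => //.
    by rewrite -uvt modn_small.
  move=> i /andP[i0 it]; rewrite inE /= (@modn_small (u + i) n); last by lia.
  rewrite -uj -{2}(addn0 u) eqn_modDl mod0n modn_small //; lia.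
- case: hab => ha0 hb2; rewrite ha0 in du; rewrite hb2 in dv.
  apply: (vis_sym (@cyc_sym n)).
  apply: (@cyc_arc n Hn k _ v u (n - (t + t))); try lia.
    by rewrite (@modnLt2 (v + (n - (t + t))) n); [case: ifP; lia | lia].
  move=> i /andP[i0 it]; rewrite inE /= (@modnLt2 (v + i) n); last by lia.
  set w := if _ then _ else _.
  have hw : (w = v + i /\ v + i < n) \/ (w = v + i - n /\ n <= v + i).
    by rewrite /w; case: ifP; lia.
  apply/negP => /eqP wj.
  have wn : w < 3 * t by rewrite /w; case: ifP; lia.
  have [c [hc dw]] := dec3 t0 wn.
  rewrite wj in dw.
  by move: hc dw => /orP[/orP[]|] /eqP ->; lia.
Qed.

Lemma pair_block_path n k (i : nat) : 0 < k ->
  kdmv_set (path_graph n) k [set x : 'I_n | x %/ 2 == i].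
Proof.
move=> hk; apply: kdmv_adj => // u v; rewrite !inE => /eqP ui /eqP vi /neq_val/eqP uv.
rewrite /path_graph; apply/orP; lia.
Qed.

Lemma pair_block_cyc n k (i : nat) : 0 < k ->
  kdmv_set (cycle_graph n) k [set x : 'I_n | x %/ 2 == i].
Proof.
move=> hk; apply: kdmv_adj => // u v; rewrite !inE => /eqP ui /eqP vi /neq_val/eqP uv.
have := ltn_ord u; have := ltn_ord v => hv hu.
rewrite /cycle_graph; apply/orP.
have [h|h] : u.+1 = v :> nat \/ v.+1 = u :> nat by lia.
  by left; rewrite modn_small h.
by right; rewrite modn_small h.
Qed.

Unset Implicit Arguments.

Theorem proposition2p4 (k : nat) (hk : 1 <= k) :
  (forall n : nat, 1 <= n -> is_chi_mu (path_graph n) k ((n + 1) %/ 2)) /\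
  (forall n : nat, 3 <= n ->
     is_chi_mu (cycle_graph n) k (if n <= 3 * k then (n + 2) %/ 3 else (n + 1) %/ 2)).
Proof.
split.
- move=> n n1; split.
  + apply: (upper (blk := fun x : 'I_n => x %/ 2)).
    * move=> x; have := ltn_ord x; lia.
    * move=> i hi; have h : 2 * i < n by lia.
      by exists (Ordinal h) => /=; lia.
    * move=> i; exact: pair_block_path.
  + move=> P hP; have := lower (fun M h => path_card h) hP; rewrite card_ord; lia.
- move=> n n3; have Hn : 0 < n by lia.
  case: ifP => hnk; split.
  + have t0 : 0 < (n + 2) %/ 3 by lia.
    apply: (upper (blk := fun x : 'I_n => x %% ((n + 2) %/ 3))).
    * by move=> x; rewrite ltn_mod.
    * move=> i hi; have h : i < n by lia.
      by exists (Ordinal h) => /=; rewrite modn_small.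
    * move=> i; exact: tri_block.
  + move=> P hP; have := lower (fun M h => cyc_card4 h) hP; rewrite card_ord; lia.
  + apply: (upper (blk := fun x : 'I_n => x %/ 2)).
    * move=> x; have := ltn_ord x; lia.
    * move=> i hi; have h : 2 * i < n by lia.
      by exists (Ordinal h) => /=; lia.
    * move=> i; exact: pair_block_cyc.
  + have hn : 3 * k < n by move/negbT: hnk; rewrite -ltnNge.
    move=> P hP; have := lower (fun M h => cyc_card3 hn h) hP; rewrite card_ord; lia.
Qed.
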